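(* Let $a>0$ and let $L\ge0$ be an integer such that $p_m:=\dfrac12+\dfrac{a}{(m+1)(\log(m+1))^2}<1$ for all $m\geq L+1$, and set $q_m=1-p_m$. Then the quantity \[ \left[1+\frac{p_k}{q_k}+\frac{p_kp_{k-1}}{q_kq_{k-1}}+\cdots+\frac{p_k\cdots p_{L+1}}{q_k\cdots q_{L+1}}\right]\cdot\left[1+\frac{q_{L+1}}{p_{L+1}}+\frac{q_{L+1}q_{L+2}}{p_{L+1}p_{L+2}}+\cdots+\frac{q_{L+1}\cdots q_k}{p_{L+1}\cdots p_k}\right]^{-1} \] stays bounded as $k\to\infty$. Equivalently, for the nearest-neighbour Markov chain $Y_n$ on $\{L,L+1,\dots\}$ stopped at $L$ with up-probabilities $p_m$, the product of the probability that $Y$ started at $L+1$ hits $k+1$ before $L$ and the expected number of upcrossings from $k$ to $k+1$ of $Y$ started at $k$ is bounded uniformly in $k$.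
   Context: Upcrossings from $k$ to $k+1$ of a chain started at $k$: the number of times the chain, after being at $k$, subsequently hits $k+1$ before being stopped at $L$ (counted via alternating hitting times of $k+1$ and $k$). *)

(* Defs.v *)
From Stdlib Require Import Reals.
Open Scope R_scope.

Definition pm (a : R) (m : nat) : R :=
  / 2 + a / (INR (m + 1) * (ln (INR (m + 1))) ^ 2).

Definition qm (a : R) (m : nat) : R := 1 - pm a m.

Fixpoint prodR (f : nat -> R) (n : nat) : R :=
  match n with
  | O => 1
  | S n' => prodR f n' * f n'
  end.

Fixpoint sumR (f : nat -> R) (n : nat) : R :=
  match n with
  | O => 0
  | S n' => sumR f n' + f n'
  end.

(* 1 + p_k/q_k + p_k p_{k-1}/(q_k q_{k-1}) + ... + p_k...p_{L+1}/(q_k...q_{L+1})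
   : term j (0 <= j <= k-L) is the product over i < j of p_{k-i}/q_{k-i}. *)
Definition bracket1 (a : R) (L k : nat) : R :=
  sumR (fun j => prodR (fun i => pm a (k - i) / qm a (k - i)) j) (k - L + 1).

(* 1 + q_{L+1}/p_{L+1} + ... + q_{L+1}...q_k/(p_{L+1}...p_k)
   : term j (0 <= j <= k-L) is the product over i < j of q_{L+1+i}/p_{L+1+i}. *)
Definition bracket2 (a : R) (L k : nat) : R :=
  sumR (fun j => prodR (fun i => qm a (L + 1 + i) / pm a (L + 1 + i)) j) (k - L + 1).

(* Main.v *)
Require Import Defs.
From Stdlib Require Import Reals Lra Lia.
Open Scope R_scope.

Lemma prodR_front (f : nat -> R) n : prodR f (S n) = f 0%nat * prodR (fun i => f (S i)) n.
Proof. induction n; simpl in *. ring. rewrite IHn. ring. Qed.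

Lemma sumR_front (f : nat -> R) n : sumR f (S n) = f 0%nat + sumR (fun i => f (S i)) n.
Proof. induction n; simpl in *. ring. rewrite IHn. ring. Qed.

Lemma sumR_ext (f g : nat -> R) n : (forall i, (i < n)%nat -> f i = g i) -> sumR f n = sumR g n.
Proof. induction n; intros H; simpl. auto. rewrite IHn, H; auto. Qed.

Lemma prodR_ext (f g : nat -> R) n : (forall i, (i < n)%nat -> f i = g i) -> prodR f n = prodR g n.
Proof. induction n; intros H; simpl. auto. rewrite IHn, H; auto. Qed.

Lemma sumR_scal c (f : nat -> R) n : sumR (fun j => c * f j) n = c * sumR f n.
Proof. induction n; simpl. ring. rewrite IHn; ring. Qed.

Lemma prodR_inv (f : nat -> R) n : prodR (fun i => / f i) n = / prodR f n.
Proof. induction n; simpl. now rewrite Rinv_1. rewrite IHn, Rinv_mult; ring. Qed.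

Definition em (a : R) (m : nat) : R := a / (INR (m + 1) * (ln (INR (m + 1))) ^ 2).
Definition rr (a : R) (m : nat) : R := pm a m / qm a m.
Definition RR (a : R) (L d : nat) : R := prodR (fun i => rr a (L + 1 + i)) d.

Lemma em_pos a m : 0 < a -> (1 <= m)%nat -> 0 < em a m.
Proof.
  intros ha hm. unfold em.
  assert (h1 : 1 < INR (m + 1)) by (rewrite plus_INR; simpl; apply le_INR in hm; simpl in hm; lra).
  assert (h2 : 0 < ln (INR (m+1))) by (rewrite <- ln_1; apply ln_increasing; lra).
  apply Rdiv_lt_0_compat; auto. apply Rmult_lt_0_compat. lra. apply pow_lt; auto.
Qed.

Lemma rr_gt1 a L m : 0 < a -> (forall m : nat, (L + 1 <= m)%nat -> pm a m < 1) ->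
  (L + 1 <= m)%nat -> 1 < rr a m.
Proof.
  intros ha hp hm. pose proof (hp m hm). pose proof (em_pos a m ha ltac:(lia)).
  unfold rr, qm in *. unfold pm in *. fold (em a m) in *.
  apply (Rmult_lt_reg_r (1 - (/2 + em a m))). lra. field_simplify; lra.
Qed.

Lemma b2_rec a L d : bracket2 a L (L + S d) = bracket2 a L (L + d) + / RR a L (S d).
Proof.
  unfold bracket2. replace (L + S d - L + 1)%nat with (S (L + d - L + 1)) by lia.
  simpl sumR at 1. f_equal. replace (L + d - L + 1)%nat with (S d) by lia.
  unfold RR. rewrite <- prodR_inv. apply prodR_ext. intros i _.
  unfold rr. unfold Rdiv. rewrite Rinv_mult, Rinv_inv. ring.
Qed.

Lemma b1_rec a L d : bracket1 a L (L + S d) = 1 + rr a (L + S d) * bracket1 a L (L + d).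
Proof.
  unfold bracket1. replace (L + S d - L + 1)%nat with (S (L + d - L + 1)) by lia.
  rewrite sumR_front. simpl prodR at 1. f_equal.
  rewrite <- sumR_scal. apply sumR_ext. intros j _. rewrite prodR_front.
  replace (L + S d - 0)%nat with (L + S d)%nat by lia. unfold rr. f_equal.
  apply prodR_ext. intros i _. now replace (L + S d - S i)%nat with (L + d - i)%nat by lia.
Qed.

Lemma RR_S a L d : RR a L (S d) = RR a L d * rr a (L + S d).
Proof. unfold RR. simpl. do 2 f_equal. lia. Qed.

Lemma RR_pos a L d : 0 < a -> (forall m : nat, (L + 1 <= m)%nat -> pm a m < 1) ->
  1 <= RR a L d.
Proof.
  intros ha hp. induction d. unfold RR; simpl; lra.
  rewrite RR_S. pose proof (rr_gt1 a L (L + S d) ha hp ltac:(lia)). nra.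
Qed.

Lemma RR_mono a L d e : 0 < a -> (forall m : nat, (L + 1 <= m)%nat -> pm a m < 1) ->
  (d <= e)%nat -> RR a L d <= RR a L e.
Proof.
  intros ha hp h. induction h. lra.
  rewrite RR_S. pose proof (rr_gt1 a L (L + S m) ha hp ltac:(lia)).
  pose proof (RR_pos a L m ha hp). nra.
Qed.

Lemma ident a L d : 0 < a -> (forall m : nat, (L + 1 <= m)%nat -> pm a m < 1) ->
  bracket1 a L (L + d) = RR a L d * bracket2 a L (L + d).
Proof.
  intros ha hp.
  induction d.
  - unfold bracket1, bracket2, RR. replace (L + 0 - L + 1)%nat with 1%nat by lia. simpl. ring.
  - rewrite b1_rec, IHd, b2_rec, RR_S.
    pose proof (rr_gt1 a L (L + S d) ha hp ltac:(lia)).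
    pose proof (RR_pos a L d ha hp). field. split; lra.
Qed.

Lemma b2_pos a L d : 0 < a -> (forall m : nat, (L + 1 <= m)%nat -> pm a m < 1) ->
  0 < bracket2 a L (L + d).
Proof.
  intros ha hp. induction d.
  - unfold bracket2. replace (L + 0 - L + 1)%nat with 1%nat by lia. simpl. lra.
  - rewrite b2_rec. pose proof (RR_pos a L (S d) ha hp).
    pose proof (Rinv_0_lt_compat _ (ltac:(lra) : 0 < RR a L (S d))). lra.
Qed.

Lemma tele a m : 0 < a -> (2 <= m)%nat ->
  em a m <= a * (/ ln (INR m) - / ln (INR (m + 1))).
Proof.
  intros ha hm. unfold em.
  set (x := INR m). assert (hx : 2 <= x) by (apply le_INR in hm; unfold x; simpl in hm; lra).
  replace (INR (m + 1)) with (x + 1) by (unfold x; rewrite plus_INR; simpl; ring).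
  set (A := ln x). set (B := ln (x + 1)).
  assert (hA : 0 < A) by (unfold A; rewrite <- ln_1; apply ln_increasing; lra).
  assert (hAB : A < B) by (unfold A, B; apply ln_increasing; lra).
  assert (hBA : 1 / (x + 1) <= B - A).
  { pose proof (exp_ineq1_le (A - B)).
    unfold Rminus in H at 2. rewrite exp_plus, exp_Ropp in H. unfold A, B in H.
    rewrite !exp_ln in H by lra. fold A B in H.
    apply (Rmult_le_reg_r (x+1)). lra.
    assert (x * / (x + 1) * (x + 1) = x) by (field; lra).
    assert (1 / (x + 1) * (x + 1) = 1) by (field; lra). nra. }
  assert (h1 : / A - / B = (B - A) / (A * B)) by (field; lra).
  rewrite h1.
  apply (Rle_trans _ (a * ((1 / (x + 1)) / (B * B)))).
  - right. simpl. field. lra.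
  - apply Rmult_le_compat_l. lra. unfold Rdiv.
    apply Rmult_le_compat; try lra.
    + apply Rmult_le_pos. lra. apply Rlt_le, Rinv_0_lt_compat; lra.
    + apply Rlt_le, Rinv_0_lt_compat; nra.
    + apply Rinv_le_contravar; nra.
Qed.

Lemma rr_le a m : 0 < em a m -> em a m <= / 4 -> rr a m <= exp (8 * em a m).
Proof.
  intros h1 h2. eapply Rle_trans; [| apply exp_ineq1_le].
  unfold rr, qm, pm. fold (em a m).
  apply (Rmult_le_reg_r (1 - (/2 + em a m))). lra. field_simplify; nra.
Qed.

Lemma threshold a : 0 < a -> exists N, (2 <= N)%nat /\ forall m, (N <= m)%nat -> em a m <= / 4.
Proof.
  intros ha. destruct (INR_unbounded (exp 1 + 4 * a)) as [N HN].
  exists (N + 2)%nat. split. lia. intros m hm.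
  assert (hx : INR N <= INR (m + 1)) by (apply le_INR; lia).
  set (x := INR (m + 1)) in *.
  assert (hl : 1 < ln x).
  { rewrite <- (ln_exp 1). apply ln_increasing. apply exp_pos. pose proof (exp_pos 1). lra. }
  unfold em. fold x. apply (Rmult_le_reg_r (x * ln x ^ 2)).
  { apply Rmult_lt_0_compat. pose proof (exp_pos 1); lra. apply pow_lt; lra. }
  unfold Rdiv. rewrite Rmult_assoc, Rinv_l, Rmult_1_r.
  - simpl. assert (1 <= ln x * ln x) by nra. pose proof (exp_pos 1). nra.
  - apply Rgt_not_eq. apply Rmult_lt_0_compat. pose proof (exp_pos 1); lra. apply pow_lt; lra.
Qed.

Lemma ln_pos_nat n : (2 <= n)%nat -> 0 < ln (INR n).
Proof. intros h. apply le_INR in h. simpl in h. rewrite <- ln_1. apply ln_increasing; lra. Qed.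

Theorem mainTheorem7 (a : R) (L : nat) (ha : 0 < a)
  (hp : forall m : nat, (L + 1 <= m)%nat -> pm a m < 1) :
  exists C : R, forall k : nat, (L + 1 <= k)%nat ->
    Rabs (bracket1 a L k * / bracket2 a L k) <= C.
Proof.
  destruct (threshold a ha) as [D [hD2 hD]].
  set (C0 := RR a L D * exp (8 * a * / ln (INR (L + D + 1)))).
  assert (inv : forall d, (D <= d)%nat ->
            RR a L d <= C0 * exp (- (8 * a * / ln (INR (L + d + 1))))).
  { intros d hd. induction hd as [|m0 hd IHhd].
    - unfold C0. rewrite Rmult_assoc, <- exp_plus, Rplus_opp_r, exp_0. lra.
    - rewrite RR_S. set (m := (L + S m0)%nat) in *.
      assert (hm : (L + m0 + 1)%nat = m) by (unfold m; lia).
      rewrite hm in IHhd.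
      assert (he : 0 < em a m) by (apply em_pos; auto; lia).
      pose proof (rr_le a m he (hD m ltac:(lia))).
      pose proof (tele a m ha ltac:(lia)).
      pose proof (RR_pos a L m0 ha hp).
      assert (hr : 0 <= rr a m) by (pose proof (rr_gt1 a L m ha hp ltac:(lia)); lra).
      eapply Rle_trans. apply Rmult_le_compat; try lra. exact IHhd. exact H.
      rewrite Rmult_assoc, <- exp_plus.
      assert (hm1 : (L + S m0 + 1)%nat = (m + 1)%nat) by (unfold m; lia).
      apply Rmult_le_compat_l.
      + unfold C0. apply Rmult_le_pos. pose proof (RR_pos a L D ha hp); lra.
        apply Rlt_le, exp_pos.
      + destruct (Rle_lt_or_eq_dec _ _ (Rle_refl 0)); [lra|].
        assert (hexp : forall x y, x <= y -> exp x <= exp y).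
        { intros x y hxy. destruct hxy. apply Rlt_le, exp_increasing; auto. subst; lra. }
        apply hexp. nra. }
  exists C0. intros k hk.
  replace k with (L + (k - L))%nat by lia. set (d := (k - L)%nat).
  rewrite ident by auto.
  pose proof (b2_pos a L d ha hp). pose proof (RR_pos a L d ha hp).
  rewrite Rmult_assoc, Rinv_r, Rmult_1_r by lra.
  rewrite Rabs_pos_eq by lra.
  destruct (Nat.le_gt_cases d D) as [h | h].
  - pose proof (RR_mono a L d D ha hp h). unfold C0.
    assert (0 < 8 * a * / ln (INR (L + D + 1))).
    { apply Rmult_lt_0_compat. lra. apply Rinv_0_lt_compat, ln_pos_nat. lia. }
    pose proof (exp_ineq1_le (8 * a * / ln (INR (L + D + 1)))).
    pose proof (RR_pos a L D ha hp). nra.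
  - eapply Rle_trans. apply inv. lia.
    assert (0 < 8 * a * / ln (INR (L + d + 1))).
    { apply Rmult_lt_0_compat. lra. apply Rinv_0_lt_compat, ln_pos_nat. lia. }
    rewrite exp_Ropp.
    pose proof (exp_ineq1_le (8 * a * / ln (INR (L + d + 1)))).
    assert (/ exp (8 * a * / ln (INR (L + d + 1))) <= 1).
    { rewrite <- Rinv_1. apply Rinv_le_contravar; lra. }
    assert (0 <= C0).
    { unfold C0. apply Rmult_le_pos. pose proof (RR_pos a L D ha hp); lra. apply Rlt_le, exp_pos. }
    nra.
Qed.
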